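(* Let $\|\cdot\|_A$ and $\|\cdot\|_P$ be norms on $\mathbb{R}^n$ such that $\|\cdot\|_A$ is decomposable and $\|\cdot\|_P$ is $\gamma$-decomposable with respect to $\mathcal{G}$ for some $\gamma\in(0,1]$. Let $a,b,c,d$ be the constants defined below, let $f>0$ be a constant such that for every $h\in\mathbb{R}^n$, every $\Lambda_0\in\mathrm{GkS}$ and every optimal group $k$-sparse decomposition $\Lambda_1,\ldots,\Lambda_s$ of $h_{\mathcal{N}\setminus\Lambda_0}$ with respect to $\|\cdot\|_A$ one has $\sum_{j=2}^s\|h_{\Lambda_j}\|_2\le\frac1f\|h_{\mathcal{N}\setminus\Lambda_0}\|_A$, and put $r=b/(a\gamma)$. Let $A\in\mathbb{R}^{m\times n}$ satisfy the group restricted isometry property (GRIP) of order $2k$ with constant $\delta_{2k}\in(0,1)$, and assume the compressibility condition $$\delta_{2k}<\frac{f}{f+\sqrt2\,rd}.$$ Let $x\in\mathbb{R}^n$, $\eta\in\mathbb{R}^m$ with $\|\eta\|_2\le\epsilon$, $y=Ax+\eta$, and let $\hat x$ be a minimizer of $\|z\|_P$ over $z\in\mathbb{R}^n$ subject to $\|y-Az\|_2\le\epsilon$. Then, writing $\sigma=\sigma_{k,\mathcal{G}}(x,\|\cdot\|_A)$, $$\|\hat x-x\|_2\le D_1\sigma+D_2\epsilon,\qquad \|\hat x-x\|_A\le D_3\sigma+D_4\epsilon,$$ where, with $\Delta=1-(1+\sqrt2\,rd/f)\delta_{2k}$, $$D_1=\frac{r(1+\gamma)}{f}\cdot\frac{1+(\sqrt2-1)\delta_{2k}}{\Delta},\qquad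 D_2=2(1+rd/f)\frac{\sqrt{1+\delta_{2k}}}{\Delta},$$ $$D_3=r(1+\gamma)\cdot\frac{1+(\sqrt2\,d/f-1)\delta_{2k}}{\Delta},\qquad D_4=2d(1+r)\frac{\sqrt{1+\delta_{2k}}}{\Delta}.$$
   Context: Fix positive integers $n,k$, $\mathcal{N}=\{1,\ldots,n\}$, and a partition $\mathcal{G}=\{G_1,\ldots,G_g\}$ of $\mathcal{N}$ with $|G_i|\le k$. For $x\in\mathbb{R}^n$, $\Lambda\subseteq\mathcal{N}$: $(x_\Lambda)_i=x_i$ if $i\in\Lambda$, else $0$; $\mathrm{supp}(u)=\{i:u_i\ne0\}$; $G_S=\bigcup_{i\in S}G_i$ for $S\subseteq\{1,\ldots,g\}$. For an integer $t$, $\Lambda$ is group $t$-sparse if $\Lambda=G_S$ for some $S$ and $|\Lambda|\le t$; $\mathrm{GkS}$ is the collection of group $k$-sparse sets. A norm $\|\cdot\|$ is $\gamma$-decomposable w.r.t. $\mathcal{G}$ ($\gamma\in(0,1]$) if $\|u+v\|\ge\|u\|+\gamma\|v\|$ whenever $\mathrm{supp}(u)\subseteq G_{S_u}$, $\mathrm{supp}(v)\subseteq G_{S_v}$ with $S_u\cap S_v=\emptyset$; decomposable means $1$-decomposable (equivalently equality $\|u+v\|=\|u\|+\|v\|$ for such $u,v$). Group $k$-sparsity index: $\sigma_{k,\mathcal{G}}(x,\|\cdot\|)=\min_{\Lambda\in\mathrm{GkS}}\|x-x_\Lambda\|$. Constants (minima/maxima over $\Lambda\in\mathrm{GkS}$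 and $x$ with $x_\Lambda\ne0$): $a=\min\|x_\Lambda\|_P/\|x_\Lambda\|_A$, $b=\max\|x_\Lambda\|_P/\|x_\Lambda\|_A$, $c=\min\|x_\Lambda\|_A/\|x_\Lambda\|_2$, $d=\max\|x_\Lambda\|_A/\|x_\Lambda\|_2$. $A$ satisfies GRIP of order $2k$ with constant $\delta_{2k}\in(0,1)$ if $(1-\delta_{2k})\|z\|_2^2\le\|Az\|_2^2\le(1+\delta_{2k})\|z\|_2^2$ for every $z$ whose support is contained in some group $2k$-sparse set. Optimal group $k$-sparse decomposition of $v=h_{\mathcal{N}\setminus\Lambda_0}$ ($\Lambda_0\in\mathrm{GkS}$) w.r.t. $\|\cdot\|_A$: pairwise disjoint group $k$-sparse sets $\Lambda_1,\ldots,\Lambda_s\subseteq\mathcal{N}\setminus\Lambda_0$ with union $\mathcal{N}\setminus\Lambda_0$, such that for each $i$, with $r_i=v-\sum_{j<i}v_{\Lambda_j}$, $\Lambda_i$ minimizes $\|r_i-(r_i)_\Lambda\|_A$ over group $k$-sparse $\Lambda\subseteq\mathcal{N}\setminus(\Lambda_0\cup\cdots\cup\Lambda_{i-1})$. *)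

(* Defs.v *)
From HB Require Import structures.
From mathcomp Require Import all_boot all_order all_algebra.
From mathcomp Require Import reals.
Set Implicit Arguments. Unset Strict Implicit. Unset Printing Implicit Defensive.
Import Order.TTheory GRing.Theory Num.Theory.
Local Open Scope ring_scope.

Definition norm2 (R : realType) (p : nat) (x : 'cV[R]_p) : R :=
  Num.sqrt (\sum_i (x i ord0) ^+ 2).

Section GroupSparse.
Variables (R : realType) (n : nat).
Implicit Types (x u v : 'cV[R]_n) (L : {set 'I_n}) (P S : {set {set 'I_n}}).

Definition restrict x L : 'cV[R]_n := \col_i (if i \in L then x i ord0 else 0).

Definition supp x : {set 'I_n} := [set i | x i ord0 != 0].


Definition is_norm (N : 'cV[R]_n -> R) : Prop :=
  [/\ forall x, N x = 0 -> x = 0,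
      forall (a : R) x, N (a *: x) = `|a| * N x
    & forall x u, N (x + u) <= N x + N u].

Definition gsparse P (t : nat) L : bool :=
  [exists S : {set {set 'I_n}}, (S \subset P) && (L == cover S)] && (#|L| <= t)%N.

Definition gdecomposable P (gamma : R) (N : 'cV[R]_n -> R) : Prop :=
  forall u v (Su Sv : {set {set 'I_n}}),
    Su \subset P -> Sv \subset P -> [disjoint Su & Sv] ->
    supp u \subset cover Su -> supp v \subset cover Sv ->
    N u + gamma * N v <= N (u + v).

Definition decomposable P N := gdecomposable P 1 N.

(* group k-sparsity index sigma_{k,G}(x, N) = min_{Lambda in GkS} N(x - x_Lambda);
   the empty set is in GkS and gives N x, so it is used as initial value. *)
Definition sigma_idx P (k : nat) (N : 'cV[R]_n -> R) x : R :=
  \big[Order.min/N x]_(L : {set 'I_n} | gsparse P k L) N (x - restrict x L).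

Definition is_min_ratio P k (N1 N2 : 'cV[R]_n -> R) (v : R) : Prop :=
  (exists L x, gsparse P k L /\ restrict x L <> 0 /\
     v = N1 (restrict x L) / N2 (restrict x L)) /\
  (forall L x, gsparse P k L -> restrict x L <> 0 ->
     v <= N1 (restrict x L) / N2 (restrict x L)).

Definition is_max_ratio P k (N1 N2 : 'cV[R]_n -> R) (v : R) : Prop :=
  (exists L x, gsparse P k L /\ restrict x L <> 0 /\
     v = N1 (restrict x L) / N2 (restrict x L)) /\
  (forall L x, gsparse P k L -> restrict x L <> 0 ->
     N1 (restrict x L) / N2 (restrict x L) <= v).

(* Optimal group k-sparse decomposition of v = h_{N \ L0} w.r.t. NA.
   Ls = [:: Lambda_1; ...; Lambda_s] (0-based in the list). The residual
   r_{i+1} = v - sum_{j<i} v_{Lambda_{j+1}} (0-based i). *)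
Definition residual h L0 (Ls : seq {set 'I_n}) (i : nat) : 'cV[R]_n :=
  restrict h (~: L0) - \sum_(j < i) restrict (restrict h (~: L0)) (nth set0 Ls j).

Definition opt_decomp P (k : nat) (NA : 'cV[R]_n -> R) h L0
    (Ls : seq {set 'I_n}) : Prop :=
  [/\ forall i, (i < size Ls)%N -> gsparse P k (nth set0 Ls i) /\
                                  nth set0 Ls i \subset ~: L0,
      forall i j, (i < size Ls)%N -> (j < size Ls)%N -> i <> j ->
                  [disjoint nth set0 Ls i & nth set0 Ls j],
      \bigcup_(L <- Ls) L = ~: L0
    & forall i, (i < size Ls)%N -> forall L, gsparse P k L ->
        L \subset ~: (L0 :|: \bigcup_(j < i) nth set0 Ls j) ->
        NA (residual h L0 Ls i - restrict (residual h L0 Ls i) (nth set0 Ls i))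
          <= NA (residual h L0 Ls i - restrict (residual h L0 Ls i) L)].

Definition GRIP P (t : nat) m (A : 'M[R]_(m, n)) (delta : R) : Prop :=
  forall z : 'cV[R]_n, (exists L, gsparse P t L /\ supp z \subset L) ->
    (1 - delta) * norm2 z ^+ 2 <= norm2 (A *m z) ^+ 2 /\
    norm2 (A *m z) ^+ 2 <= (1 + delta) * norm2 z ^+ 2.

End GroupSparse.

(* Main.v *)
Require Import Defs.
From HB Require Import structures.
From mathcomp Require Import all_boot all_order all_algebra.
From mathcomp Require Import reals.
From mathcomp Require Import ring lra zify.
Import Order.TTheory GRing.Theory Num.Theory.
Local Open Scope ring_scope.

Set Implicit Arguments. Unset Strict Implicit. Unset Printing Implicit Defensive.

Section Vec.
Variable R : realType.

Definition dotp (p : nat) (u v : 'cV[R]_p) : R := \sum_i u i ord0 * v i ord0.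

Lemma dotpC p (u v : 'cV[R]_p) : dotp u v = dotp v u.
Proof. by apply: eq_bigr => i _; rewrite mulrC. Qed.

Lemma dotpDr p (u v w : 'cV[R]_p) : dotp u (v + w) = dotp u v + dotp u w.
Proof. by rewrite /dotp -big_split; apply: eq_bigr => i _; rewrite mxE mulrDr. Qed.

Lemma dotpDl p (u v w : 'cV[R]_p) : dotp (v + w) u = dotp v u + dotp w u.
Proof. by rewrite dotpC dotpDr !(dotpC u). Qed.

Lemma dotp0r p (u : 'cV[R]_p) : dotp u 0 = 0.
Proof. by rewrite /dotp big1 // => i _; rewrite mxE mulr0. Qed.

Lemma dotpNr p (u v : 'cV[R]_p) : dotp u (- v) = - dotp u v.
Proof. by rewrite /dotp -sumrN; apply: eq_bigr => i _; rewrite mxE mulrN. Qed.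

Lemma dotpZr p (u v : 'cV[R]_p) s : dotp u (s *: v) = s * dotp u v.
Proof. by rewrite /dotp mulr_sumr; apply: eq_bigr => i _; rewrite mxE mulrCA. Qed.

Lemma dotpZl p (u v : 'cV[R]_p) s : dotp (s *: v) u = s * dotp v u.
Proof. by rewrite dotpC dotpZr dotpC. Qed.

Lemma dotp_sumr p (u : 'cV[R]_p) I (r : seq I) (Q : pred I) (F : I -> 'cV[R]_p) :
  dotp u (\sum_(j <- r | Q j) F j) = \sum_(j <- r | Q j) dotp u (F j).
Proof. exact: (big_morph (dotp u) (dotpDr u) (dotp0r u)). Qed.

Lemma dotp_ge0 p (u : 'cV[R]_p) : 0 <= dotp u u.
Proof. by apply: sumr_ge0 => i _; rewrite -expr2 sqr_ge0. Qed.

Lemma norm2_dot p (u : 'cV[R]_p) : norm2 u = Num.sqrt (dotp u u).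
Proof. by rewrite /norm2 /dotp; congr Num.sqrt; apply: eq_bigr => i _; rewrite expr2. Qed.

Lemma norm2_ge0 p (u : 'cV[R]_p) : 0 <= norm2 u.
Proof. exact: sqrtr_ge0. Qed.

Lemma norm2_sq p (u : 'cV[R]_p) : norm2 u ^+ 2 = dotp u u.
Proof. by rewrite norm2_dot sqr_sqrtr // dotp_ge0. Qed.

Lemma dotp_eq0 p (u : 'cV[R]_p) : dotp u u = 0 -> u = 0.
Proof.
move=> h; apply/matrixP => i j; rewrite ord1 mxE.
have H : u i ord0 * u i ord0 = 0.
  apply: (@psumr_eq0P R _ predT (fun i => u i ord0 * u i ord0)) => //.
  by move=> l _; rewrite -expr2 sqr_ge0.
by move/eqP: H; rewrite mulf_eq0 orbb => /eqP.
Qed.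

Lemma norm2_eq0 p (u : 'cV[R]_p) : norm2 u = 0 -> u = 0.
Proof. by move=> h; apply: dotp_eq0; rewrite -norm2_sq h expr0n. Qed.

Lemma norm2_0 p : norm2 (0 : 'cV[R]_p) = 0.
Proof. by rewrite norm2_dot dotp0r sqrtr0. Qed.

Lemma dotp_le p (u v : 'cV[R]_p) (s t : R) :
  2 * s * t * dotp u v <= t ^+ 2 * dotp u u + s ^+ 2 * dotp v v.
Proof.
have : 0 <= dotp (t *: u - s *: v) (t *: u - s *: v) by apply: dotp_ge0.
rewrite dotpDl !dotpDr !dotpNr -!scaleNr !dotpZl !dotpZr (dotpC v u).
move=> H; nra.
Qed.

Lemma CS p (u v : 'cV[R]_p) : dotp u v <= norm2 u * norm2 v.
Proof.
have [hu|hu] := eqVneq (norm2 u) 0.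
  by rewrite (norm2_eq0 hu) dotpC dotp0r norm2_0 mul0r.
have [hv|hv] := eqVneq (norm2 v) 0.
  by rewrite (norm2_eq0 hv) dotp0r norm2_0 mulr0.
have H := dotp_le u v (norm2 u) (norm2 v).
rewrite -!norm2_sq in H.
have hpos : 0 < norm2 u * norm2 v.
  by rewrite mulr_gt0 // lt0r ?hu ?hv norm2_ge0.
have : (2 * (norm2 u * norm2 v)) * dotp u v <= (2 * (norm2 u * norm2 v)) * (norm2 u * norm2 v).
  move: H; set a := norm2 u; set b := norm2 v; move=> H. nra.
by rewrite ler_pM2l // mulr_gt0.
Qed.

Lemma norm2D p (u v : 'cV[R]_p) : norm2 (u + v) <= norm2 u + norm2 v.
Proof.
rewrite [norm2 (u+v)]norm2_dot -(ger0_norm (addr_ge0 (norm2_ge0 u) (norm2_ge0 v))).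
rewrite -sqrtr_sqr ler_sqrt ?sqr_ge0 //.
rewrite dotpDl !dotpDr (dotpC v u) sqrrD !norm2_sq.
have := CS u v; lra.
Qed.

Lemma norm2N p (u : 'cV[R]_p) : norm2 (- u) = norm2 u.
Proof. by rewrite !norm2_dot -scaleN1r dotpZl dotpZr mulrA mulN1r opprK mul1r. Qed.

Lemma norm2_sum p I (r : seq I) (Q : pred I) (F : I -> 'cV[R]_p) :
  norm2 (\sum_(j <- r | Q j) F j) <= \sum_(j <- r | Q j) norm2 (F j).
Proof.
elim: r => [|x r IH]; first by rewrite !big_nil norm2_0.
rewrite !big_cons; case: (Q x) => //.
by apply: le_trans (norm2D _ _) _; rewrite lerD2l.
Qed.

End Vec.


Section Restr.
Variables (R : realType) (n : nat).
Implicit Types (u v z : 'cV[R]_n) (L A B : {set 'I_n}).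

Lemma restrictD u v L : restrict (u + v) L = restrict u L + restrict v L.
Proof. by apply/matrixP => i j; rewrite !mxE; case: (i \in L); rewrite ?addr0. Qed.

Lemma restrictN u L : restrict (- u) L = - restrict u L.
Proof. by apply/matrixP => i j; rewrite !mxE; case: (i \in L); rewrite ?oppr0. Qed.

Lemma restrictB u v L : restrict (u - v) L = restrict u L - restrict v L.
Proof. by rewrite restrictD restrictN. Qed.

Lemma restrict0 L : restrict (0 : 'cV[R]_n) L = 0.
Proof. by apply/matrixP => i j; rewrite !mxE; case: (i \in L). Qed.

Lemma restrict_set0 u : restrict u set0 = 0.
Proof. by apply/matrixP => i j; rewrite !mxE inE. Qed.

Lemma restrict_sum I (r : seq I) (Q : pred I) (F : I -> 'cV[R]_n) L :
  restrict (\sum_(j <- r | Q j) F j) L = \sum_(j <- r | Q j) restrict (F j) L.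
Proof. exact: (big_morph (fun u => restrict u L) (fun u v => restrictD u v L) (restrict0 L)). Qed.

Lemma restrictC u L : restrict u L + restrict u (~: L) = u.
Proof.
apply/matrixP => i j; rewrite !mxE inE (ord1 j).
by case: (i \in L); rewrite /= ?addr0 ?add0r.
Qed.

Lemma restrict_compl u L : u - restrict u L = restrict u (~: L).
Proof. by rewrite -{1}(restrictC u L) addrAC subrr add0r. Qed.

Lemma restrictI u L L' : restrict (restrict u L) L' = restrict u (L :&: L').
Proof. by apply/matrixP => i j; rewrite !mxE inE; case: (i \in L); case: (i \in L'). Qed.

Lemma restrict_disjU u A B : [disjoint A & B] ->
  restrict u (A :|: B) = restrict u A + restrict u B.
Proof.
move=> /disjoint_setI0 hAB; apply/matrixP => i j; rewrite !mxE inE.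
case hA: (i \in A); case hB: (i \in B); rewrite /= ?addr0 ?add0r //.
have : i \in A :&: B by rewrite inE hA hB.
by rewrite hAB inE.
Qed.

Lemma restrict_sub u A B : A \subset B -> restrict (restrict u B) A = restrict u A.
Proof. by move=> /setIidPr hAB; rewrite restrictI hAB. Qed.

Lemma supp_restrict u L : supp (restrict u L) \subset L.
Proof.
apply/subsetP => i; rewrite inE mxE.
by case: (i \in L) => //; rewrite eqxx.
Qed.

Lemma dotp_disj u v A B : [disjoint A & B] -> dotp (restrict u A) (restrict v B) = 0.
Proof.
move=> /disjoint_setI0 hAB; rewrite /dotp big1 // => i _; rewrite !mxE.
case hA: (i \in A); case hB: (i \in B); rewrite ?mulr0 ?mul0r //.
have : i \in A :&: B by rewrite inE hA hB.
by rewrite hAB inE.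
Qed.

Lemma norm2_disjU u A B : [disjoint A & B] ->
  norm2 (restrict u (A :|: B)) ^+ 2 = norm2 (restrict u A) ^+ 2 + norm2 (restrict u B) ^+ 2.
Proof.
move=> hAB; have h1 := dotp_disj u u hAB.
have h2 : dotp (restrict u B) (restrict u A) = 0 by rewrite dotpC.
by rewrite restrict_disjU // !norm2_sq dotpDl !dotpDr h1 h2 add0r addr0.
Qed.

Lemma mulmx_sum m (M : 'M[R]_(m, n)) I (r : seq I) (Q : pred I) (F : I -> 'cV[R]_n) :
  M *m (\sum_(j <- r | Q j) F j) = \sum_(j <- r | Q j) M *m F j.
Proof. exact: (big_morph (mulmx M) (mulmxDr M) (mulmx0 _ M)). Qed.

End Restr.

Section Norms.
Variables (R : realType) (n : nat).
Variable N : 'cV[R]_n -> R.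
Hypothesis hN : is_norm N.

Lemma norm0 : N 0 = 0.
Proof. by case: hN => _ hZ _; rewrite -(scale0r (0 : 'cV[R]_n)) hZ normr0 mul0r. Qed.

Lemma normN u : N (- u) = N u.
Proof. by case: hN => _ hZ _; rewrite -scaleN1r hZ normrN normr1 mul1r. Qed.

Lemma normD u v : N (u + v) <= N u + N v.
Proof. by case: hN. Qed.

Lemma norm_ge0 u : 0 <= N u.
Proof.
have := normD u (- u); rewrite subrr norm0 normN; lra.
Qed.

Lemma norm_gt0 u : u != 0 -> 0 < N u.
Proof.
move=> hu; rewrite lt0r norm_ge0 andbT; apply/eqP => h.
by case: hN => h0 _ _; move/eqP: hu; apply; apply: h0.
Qed.

Lemma normB u v : N u - N v <= N (u - v).
Proof. have := normD (u - v) v; rewrite subrK; lra. Qed.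

Lemma norm_sum I (r : seq I) (Q : pred I) (F : I -> 'cV[R]_n) :
  N (\sum_(j <- r | Q j) F j) <= \sum_(j <- r | Q j) N (F j).
Proof.
elim: r => [|x r IH]; first by rewrite !big_nil norm0.
rewrite !big_cons; case: (Q x) => //.
by apply: le_trans (normD _ _) _; rewrite lerD2l.
Qed.

End Norms.


Section Part.
Variables (n : nat) (P : {set {set 'I_n}}).
Hypothesis hP : partition P [set: 'I_n].

Lemma htriv : trivIset P. Proof. exact: partition_trivIset hP. Qed.
Lemma hcov x : x \in cover P. Proof. by rewrite (cover_partition hP) inE. Qed.

Lemma same_block G B x : G \in P -> B \in P -> x \in G -> x \in B -> G = B.
Proof.
move=> hG hB hxG hxB; apply/eqP; apply/negPn/negP => hne.
have := (trivIsetP htriv) _ _ hG hB hne.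
move/disjoint_setI0 => h; have : x \in G :&: B by rewrite inE hxG hxB.
by rewrite h inE.
Qed.

Definition sat (L : {set 'I_n}) := forall G x y, G \in P -> x \in G -> y \in G -> x \in L -> y \in L.

Lemma sat_cover (S : {set {set 'I_n}}) : S \subset P -> sat (cover S).
Proof.
move=> hS G x y hG hx hy /bigcupP [B hB hxB].
have hBP : B \in P by apply: (subsetP hS).
by rewrite (same_block hG hBP hx hxB) in hy; apply/bigcupP; exists B.
Qed.

Lemma satC L : sat L -> sat (~: L).
Proof.
move=> h G x y hG hx hy; rewrite !inE => hxL; apply/negP => hyL.
by move/negP: hxL; apply; apply: (h G y x).
Qed.

Lemma satU A B : sat A -> sat B -> sat (A :|: B).
Proof.
move=> hA hB G x y hG hx hy; rewrite !inE => /orP [h|h].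
  by rewrite (hA G x y).
by rewrite (hB G x y) ?orbT.
Qed.

Lemma sat_big s (F : nat -> {set 'I_n}) : (forall j, (j < s)%N -> sat (F j)) ->
  sat (\bigcup_(j < s) F j).
Proof.
move=> h G x y hG hx hy /bigcupP [j _ hj]; apply/bigcupP; exists j => //.
by apply: (h j (ltn_ord j) G x y).
Qed.

Lemma gsparse_cover t L : gsparse P t L -> exists2 S : {set {set 'I_n}}, S \subset P & L = cover S.
Proof. by case/andP => /existsP [S /andP [h1 /eqP h2]] _; exists S. Qed.

Lemma gsparse_sat t L : gsparse P t L -> sat L.
Proof. by move/gsparse_cover => [S hS ->]; apply: sat_cover. Qed.

Lemma gsparse0 t : gsparse P t set0.
Proof.
apply/andP; split; last by rewrite cards0.
by apply/existsP; exists set0; rewrite sub0set /cover big_set0 eqxx.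
Qed.

Lemma gsparse_card t L : gsparse P t L -> (#|L| <= t)%N.
Proof. by case/andP. Qed.

Lemma gsparse_mono t t' L : (t <= t')%N -> gsparse P t L -> gsparse P t' L.
Proof. by move=> htt /andP [h1 h2]; rewrite /gsparse h1 (leq_trans h2). Qed.

Lemma gsparse_group k G : G \in P -> (#|G| <= k)%N -> gsparse P k G.
Proof.
move=> hG hk; rewrite /gsparse hk andbT; apply/existsP; exists [set G].
by rewrite sub1set hG cover1 eqxx.
Qed.

Lemma gsparseU k A B : gsparse P k A -> gsparse P k B -> gsparse P (2 * k) (A :|: B).
Proof.
move=> hA hB; have [SA hSA eA] := gsparse_cover hA; have [SB hSB eB] := gsparse_cover hB.
rewrite /gsparse; apply/andP; split.
  apply/existsP; exists (SA :|: SB); rewrite subUset hSA hSB /=.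
  by rewrite eA eB /cover bigcup_setU.
have := gsparse_card hA; have := gsparse_card hB; rewrite cardsU; lia.
Qed.

Lemma sat_block L x : sat L -> x \in L ->
  [/\ pblock P x \in P, x \in pblock P x & pblock P x \subset L].
Proof.
move=> hL hx; have hB := pblock_mem (hcov x); have hxB : x \in pblock P x by rewrite mem_pblock hcov.
split=> //; apply/subsetP => y hy; exact: (hL _ x y hB hxB hy hx).
Qed.

Lemma compl_cover (S : {set {set 'I_n}}) : S \subset P -> ~: cover S = cover (P :\: S).
Proof.
move=> hS; apply/setP => x; rewrite inE.
have hB := pblock_mem (hcov x); have hxB : x \in pblock P x by rewrite mem_pblock hcov.
apply/idP/idP.
  move=> hx; apply/bigcupP; exists (pblock P x) => //; rewrite inE hB andbT.
  by apply/negP => hin; move/negP: hx; apply; apply/bigcupP; exists (pblock P x).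
move=> /bigcupP [B]; rewrite inE => /andP [hBS hBP] hxB'.
apply/negP => /bigcupP [B' hB'S hxB''].
have := same_block hBP (subsetP hS _ hB'S) hxB' hxB''.
by move=> e; rewrite e hB'S in hBS.
Qed.

End Part.

Section Groups.
Variables (R : realType) (n : nat) (P : {set {set 'I_n}}).
Hypothesis hP : partition P [set: 'I_n].

Lemma sum_groups (z : 'cV[R]_n) : \sum_(G in P) restrict z G = z.
Proof.
apply/matrixP => i j; rewrite summxE (ord1 j).
have hB := pblock_mem (hcov hP i).
have hxB : i \in pblock P i by rewrite mem_pblock hcov.
rewrite (bigD1 (pblock P i)) //= mxE hxB big1 ?addr0 // => G /andP [hG hne].
rewrite mxE; case: ifP => // hiG.
by move: hne; rewrite (same_block hP hG hB hiG hxB) eqxx.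
Qed.

Lemma supp_sum_groups (z : 'cV[R]_n) (s : seq {set 'I_n}) :
  supp (\sum_(G <- s) restrict z G) \subset cover [set G | G \in s].
Proof.
apply/subsetP => i; rewrite inE summxE; apply: contraR => hi.
apply/eqP; rewrite big1_seq // => G hG; rewrite mxE; case: ifP => // hiG.
by case/negP: hi; apply/bigcupP; exists G; rewrite ?inE.
Qed.

Lemma gdecomp_sum (N : 'cV[R]_n -> R) g (z : 'cV[R]_n) :
  is_norm N -> gdecomposable P g N -> 0 <= g ->
  forall s : seq {set 'I_n}, uniq s -> {subset s <= P} ->
  g * \sum_(G <- s) N (restrict z G) <= N (\sum_(G <- s) restrict z G).
Proof.
move=> hN hdec hg; elim => [|G s IH]; first by rewrite !big_nil mulr0 norm0.
rewrite /= => /andP [hGs hu] hsub.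
have hGP : G \in P by apply: hsub; rewrite inE eqxx.
have hsP : {subset s <= P} by move=> B hB; apply: hsub; rewrite inE hB orbT.
rewrite !big_cons [restrict z G + _]addrC.
have := hdec (\sum_(j <- s) restrict z j) (restrict z G) [set B | B \in s] [set G].
have -> : [set B | B \in s] \subset P by apply/subsetP => B; rewrite inE => /hsP.
rewrite sub1set hGP supp_sum_groups cover1 supp_restrict.
have -> : [disjoint [set B | B \in s] & [set G]].
  rewrite disjoint_sym disjoints1 inE; exact: hGs.
move=> /(_ isT isT isT isT isT) H.
have := IH hu hsP; rewrite mulrDr; lra.
Qed.

Lemma normA_groups (NA : 'cV[R]_n -> R) (z : 'cV[R]_n) :
  is_norm NA -> decomposable P NA -> NA z = \sum_(G in P) NA (restrict z G).
Proof.
move=> hN hdec; apply/eqP; rewrite eq_le; apply/andP; split.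
  by rewrite -{1}(sum_groups z) norm_sum.
have hs : {subset enum (mem P) <= P} by move=> G; rewrite mem_enum.
have := gdecomp_sum z hN hdec ler01 (enum_uniq (mem P)) hs.
by rewrite mul1r !big_enum sum_groups.
Qed.

End Groups.


Section Greedy.
Variables (R : realType) (n k : nat) (P : {set {set 'I_n}}).
Hypothesis hP : partition P [set: 'I_n].
Hypothesis hPk : forall B, B \in P -> (#|B| <= k)%N.
Variable NA : 'cV[R]_n -> R.
Hypothesis hNA : is_norm NA.
Hypothesis hdecA : decomposable P NA.
Variables (h : 'cV[R]_n) (L0 : {set 'I_n}).
Hypothesis hL0 : gsparse P k L0.

Definition valid (Ls : seq {set 'I_n}) :=
  [/\ forall i, (i < size Ls)%N -> gsparse P k (nth set0 Ls i) /\
                                  nth set0 Ls i \subset ~: L0,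
      forall i j, (i < size Ls)%N -> (j < size Ls)%N -> i <> j ->
                  [disjoint nth set0 Ls i & nth set0 Ls j]
    & forall i, (i < size Ls)%N -> forall L, gsparse P k L ->
        L \subset ~: (L0 :|: \bigcup_(j < i) nth set0 Ls j) ->
        NA (residual h L0 Ls i - restrict (residual h L0 Ls i) (nth set0 Ls i))
          <= NA (residual h L0 Ls i - restrict (residual h L0 Ls i) L)].

Definition rem (Ls : seq {set 'I_n}) := ~: (L0 :|: \bigcup_(j < size Ls) nth set0 Ls j).

Lemma bigcup_rcons (Ls : seq {set 'I_n}) L i : (i <= size Ls)%N ->
  \bigcup_(j < i) nth set0 (rcons Ls L) j = \bigcup_(j < i) nth set0 Ls j.
Proof.
move=> hi; apply: eq_bigr => j _; rewrite nth_rcons.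
by have -> : (j < size Ls)%N by apply: leq_trans (ltn_ord j) hi.
Qed.

Lemma residual_rcons (Ls : seq {set 'I_n}) L i : (i <= size Ls)%N ->
  residual h L0 (rcons Ls L) i = residual h L0 Ls i.
Proof.
move=> hi; rewrite /residual; congr (_ - _); apply: eq_bigr => j _; rewrite nth_rcons.
by have -> : (j < size Ls)%N by apply: leq_trans (ltn_ord j) hi.
Qed.

Lemma decomp_le (r : 'cV[R]_n) G : G \in P ->
  NA (r - restrict r G) <= NA r.
Proof.
move=> hG.
have := (hdecA : gdecomposable P 1 NA) (restrict r (~: G)) (restrict r G) (P :\: [set G]) [set G].
rewrite subsetDl sub1set hG cover1 supp_restrict.
have e : cover (P :\: [set G]) = ~: G by rewrite -(compl_cover hP) ?sub1set // cover1.
rewrite e supp_restrict.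
have -> : [disjoint P :\: [set G] & [set G]].
  by rewrite disjoint_sym disjoints1 !inE eqxx.
move=> /(_ isT isT isT isT isT) H.
rewrite restrict_compl; rewrite [restrict r (~: G) + _]addrC restrictC in H.
have := norm_ge0 hNA (restrict r G); lra.
Qed.

Lemma valid_step (Ls : seq {set 'I_n}) : valid Ls -> rem Ls != set0 ->
  exists L, valid (rcons Ls L) /\ (#|rem (rcons Ls L)| < #|rem Ls|)%N.
Proof.
move=> [v1 v2 v3] hne.
have hsat : sat P (rem Ls).
  rewrite /rem; apply: satC; apply: satU; first exact: (gsparse_sat hP hL0).
  by apply: sat_big => j hj; apply: (gsparse_sat hP (v1 j hj).1).
have [x hx] := set0Pn _ hne.
have [hGP hxG hGsub] := sat_block hP hsat hx.
set G := pblock P x in hGP hxG hGsub.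
have hGk : gsparse P k G by apply: gsparse_group; rewrite ?hPk.
set r := residual h L0 Ls (size Ls).
pose C := fun L : {set 'I_n} => gsparse P k L && (L \subset rem Ls).
pose F := fun L : {set 'I_n} => NA (r - restrict r L).
have hC0 : C set0 by rewrite /C gsparse0 sub0set.
case: (@arg_minP _ R _ set0 C F hC0) => Lmin hCmin hmin.
pose Lnew := if Lmin == set0 then G else Lmin.
have hCnew : C Lnew by rewrite /Lnew; case: ifP => // _; rewrite /C hGk hGsub.
have hnew0 : Lnew != set0.
  rewrite /Lnew; case: ifP => [_|/negbT //]; by apply/set0Pn; exists x.
have hFnew : forall L, C L -> F Lnew <= F L.
  move=> L hL; rewrite /Lnew; case: ifP => [/eqP e|_]; last exact: hmin.
  apply: le_trans (hmin L hL); rewrite e /F restrict_set0 subr0.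
  exact: decomp_le.
move/andP: hCnew => [hnk hnsub].
have hbig : \bigcup_(j < size (rcons Ls Lnew)) nth set0 (rcons Ls Lnew) j =
    (\bigcup_(j < size Ls) nth set0 Ls j) :|: Lnew.
  rewrite size_rcons big_ord_recr /= bigcup_rcons // nth_rcons ltnn eqxx //.
have hremN : rem (rcons Ls Lnew) = rem Ls :\: Lnew.
  by rewrite /rem hbig setUA setCU setDE.
have hdisj : forall j, (j < size Ls)%N -> [disjoint Lnew & nth set0 Ls j].
  move=> j hj; rewrite disjoint_subset; apply: (subset_trans hnsub).
  apply/subsetP => y; rewrite /rem !inE negb_or => /andP [_ hy].
  by apply: contra hy => hyj; apply/bigcupP; exists (Ordinal hj).
exists Lnew; split; last first.
  rewrite hremN; apply: proper_card; rewrite properEneq subsetDl andbT.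
  have [y hy] := set0Pn _ hnew0.
  apply/eqP => e; have : y \in rem Ls :\: Lnew by rewrite e (subsetP hnsub).
  by rewrite inE hy.
split.
- move=> i; rewrite size_rcons ltnS leq_eqVlt => /orP [/eqP ->|hi].
    rewrite nth_rcons ltnn eqxx; split => //; apply: subset_trans hnsub _.
    by rewrite setCS subsetUl.
  by rewrite nth_rcons hi; apply: v1.
- move=> i j; rewrite size_rcons !ltnS.
  rewrite leq_eqVlt => /orP [/eqP ->|hi]; rewrite leq_eqVlt => /orP [/eqP ->|hj] hij //.
  + by rewrite !nth_rcons ltnn eqxx hj; apply: hdisj.
  + by rewrite !nth_rcons ltnn eqxx hi disjoint_sym; apply: hdisj.
  + by rewrite !nth_rcons hi hj; apply: v2.
- move=> i; rewrite size_rcons ltnS leq_eqVlt => /orP [/eqP ->|hi] L hL hLsub.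
    rewrite residual_rcons // bigcup_rcons // in hLsub *.
    rewrite nth_rcons ltnn eqxx -/r; apply: hFnew; rewrite /C hL.
    exact: hLsub.
  rewrite residual_rcons ?(ltnW hi) // bigcup_rcons ?(ltnW hi) // in hLsub *.
  by rewrite nth_rcons hi; apply: v3.
Qed.

Lemma valid_final (Ls : seq {set 'I_n}) : valid Ls -> rem Ls = set0 -> opt_decomp P k NA h L0 Ls.
Proof.
move=> [v1 v2 v3] hrem; split => //.
rewrite (big_nth set0) big_mkord.
apply/setP => y; apply/idP/idP.
  move=> /bigcupP [i _ hyL].
  by have [_ /subsetP] := v1 i (ltn_ord i); apply.
move=> hy.
have : y \notin rem Ls by rewrite hrem inE.
rewrite /rem !inE negbK => /orP [hy0|//]; by move: hy; rewrite inE hy0.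
Qed.

Lemma opt_exists : exists Ls, opt_decomp P k NA h L0 Ls.
Proof.
suff : forall c Ls, (#|rem Ls| <= c)%N -> valid Ls -> exists Ls', opt_decomp P k NA h L0 Ls'.
  by move/(_ #|rem [::]| [::] (leqnn _)); apply; split.
elim => [|c IH] Ls hc hv.
  exists Ls; apply: valid_final => //; apply/eqP; rewrite -cards_eq0; lia.
have [he|hne] := eqVneq (rem Ls) set0; first by exists Ls; apply: valid_final.
have [L [hv' hlt]] := valid_step hv hne.
apply: (IH (rcons Ls L)) => //; lia.
Qed.

End Greedy.


Section Ratio.
Variables (R : realType) (n k : nat) (P : {set {set 'I_n}}).
Variables (N1 N2 : 'cV[R]_n -> R) (v : R).
Hypothesis h10 : N1 0 = 0.
Hypothesis h20 : N2 0 = 0.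
Hypothesis h2pos : forall u, u != 0 -> 0 < N2 u.

Lemma max_ratio_le z L : is_max_ratio P k N1 N2 v -> gsparse P k L ->
  N1 (restrict z L) <= v * N2 (restrict z L).
Proof.
move=> [_ hv] hL; have [e|ne] := eqVneq (restrict z L) 0.
  by rewrite e h10 h20 mulr0.
have := hv L z hL (elimN eqP ne).
by rewrite ler_pdivrMr ?h2pos // mulrC.
Qed.

Lemma min_ratio_ge z L : is_min_ratio P k N1 N2 v -> gsparse P k L ->
  v * N2 (restrict z L) <= N1 (restrict z L).
Proof.
move=> [_ hv] hL; have [e|ne] := eqVneq (restrict z L) 0.
  by rewrite e h10 h20 mulr0.
have := hv L z hL (elimN eqP ne).
by rewrite ler_pdivlMr ?h2pos // mulrC.
Qed.

Hypothesis h1pos : forall u, u != 0 -> 0 < N1 u.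

Lemma min_ratio_pos : is_min_ratio P k N1 N2 v -> 0 < v.
Proof.
move=> [[L [z [_ [hne ->]]]] _].
by apply: divr_gt0; [apply: h1pos | apply: h2pos]; apply/eqP.
Qed.

Lemma max_ratio_pos : is_max_ratio P k N1 N2 v -> 0 < v.
Proof.
move=> [[L [z [_ [hne ->]]]] _].
by apply: divr_gt0; [apply: h1pos | apply: h2pos]; apply/eqP.
Qed.

End Ratio.

Section Grip.
Variables (R : realType) (n k m : nat) (P : {set {set 'I_n}}).
Hypothesis hP : partition P [set: 'I_n].

Lemma norm2_pos (u : 'cV[R]_n) : u != 0 -> 0 < norm2 u.
Proof.
move=> hu; rewrite lt0r norm2_ge0 andbT; apply/eqP => h.
by move/eqP: hu; apply; apply: norm2_eq0.
Qed.

Lemma grip_dot (M : 'M[R]_(m, n)) (dl : R) L1 L2 (z : 'cV[R]_n) :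
  GRIP P (2 * k) M dl -> gsparse P k L1 -> gsparse P k L2 -> [disjoint L1 & L2] ->
  - dl * norm2 (restrict z L1) * norm2 (restrict z L2)
    <= dotp (M *m restrict z L1) (M *m restrict z L2).
Proof.
move=> hG h1 h2 hd.
set u := restrict z L1; set v := restrict z L2.
have [eu|neu] := eqVneq u 0.
  by rewrite eu mulmx0 norm2_0 dotpC dotp0r mulr0 mul0r.
have [ev|nev] := eqVneq v 0.
  by rewrite ev mulmx0 norm2_0 dotp0r mulr0.
set U := norm2 u; set V := norm2 v.
have hU : 0 < U by apply: norm2_pos.
have hV : 0 < V by apply: norm2_pos.
have hsupp : forall s t : R, exists L, gsparse P (2 * k) L /\ supp (s *: u + t *: v) \subset L.
  move=> s t; exists (L1 :|: L2); split; first exact: gsparseU.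
  apply/subsetP => i; rewrite !inE !mxE; apply: contraR; rewrite negb_or => /andP [hi1 hi2].
  by rewrite (negbTE hi1) (negbTE hi2) !mulr0 addr0.
have huv : dotp u v = 0 by apply: dotp_disj.
have [hw1 _] := hG _ (hsupp V U).
have [_ hw2] := hG _ (hsupp V (- U)).
rewrite !norm2_sq !mulmxDr -!scalemxAr in hw1 hw2.
rewrite !dotpDl !dotpDr !dotpZl !dotpZr huv (dotpC v u) huv in hw1 hw2.
rewrite (dotpC (M *m v) (M *m u)) -(norm2_sq u) -(norm2_sq v) -/U -/V in hw1 hw2.
set D := dotp (M *m u) (M *m v) in hw1 hw2 *.
set Su := dotp (M *m u) (M *m u) in hw1 hw2.
set Sv := dotp (M *m v) (M *m v) in hw1 hw2.
have hUV : 0 < U * V by apply: mulr_gt0.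
have : (4 * (U * V)) * (- dl * U * V) <= (4 * (U * V)) * D.
  nra.
by rewrite ler_pM2l // mulr_gt0.
Qed.

End Grip.

Lemma sigma_real (R : realType) (n k : nat) (P : {set {set 'I_n}}) (NA : 'cV[R]_n -> R) (x : 'cV[R]_n) :
  exists L0, gsparse P k L0 /\ sigma_idx P k NA x = NA (x - restrict x L0).
Proof.
rewrite /sigma_idx.
apply: (big_ind (fun s => exists L0, gsparse P k L0 /\ s = NA (x - restrict x L0))).
- by exists set0; rewrite gsparse0 restrict_set0 subr0.
- move=> s1 s2 [L1 [h1 e1]] [L2 [h2 e2]].
  by rewrite /Order.min; case: ifP => _; [exists L1 | exists L2].
- by move=> L hL; exists L.
Qed.


Section More.
Variables (R : realType) (n : nat) (P : {set {set 'I_n}}).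
Hypothesis hP : partition P [set: 'I_n].

Lemma supp_add (u v : 'cV[R]_n) : supp (u + v) \subset supp u :|: supp v.
Proof.
apply/subsetP => i; rewrite !inE mxE; apply: contraR; rewrite negb_or !negbK.
by move=> /andP [/eqP -> /eqP ->]; rewrite addr0.
Qed.

Lemma gdecomp_base (N : 'cV[R]_n -> R) g (z u0 : 'cV[R]_n) (S0 : {set {set 'I_n}}) :
  is_norm N -> gdecomposable P g N -> S0 \subset P -> supp u0 \subset cover S0 ->
  forall s : seq {set 'I_n}, uniq s -> {subset s <= P} -> (forall G, G \in s -> G \notin S0) ->
  N u0 + g * \sum_(G <- s) N (restrict z G) <= N (u0 + \sum_(G <- s) restrict z G).
Proof.
move=> hN hdec hS0 hu0; elim => [|G s IH]; first by rewrite !big_nil mulr0 !addr0.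
rewrite /= => /andP [hGs hu] hsub hnS.
have hGP : G \in P by apply: hsub; rewrite inE eqxx.
have hsP : {subset s <= P} by move=> B hB; apply: hsub; rewrite inE hB orbT.
have hnS' : forall B, B \in s -> B \notin S0 by move=> B hB; apply: hnS; rewrite inE hB orbT.
rewrite !big_cons [restrict z G + _]addrC addrA.
have := (hdec : gdecomposable P g N) (u0 + \sum_(j <- s) restrict z j) (restrict z G)
   (S0 :|: [set B | B \in s]) [set G].
have -> : S0 :|: [set B | B \in s] \subset P.
  by rewrite subUset hS0; apply/subsetP => B; rewrite inE => /hsP.
rewrite sub1set hGP cover1 supp_restrict.
have -> : [disjoint S0 :|: [set B | B \in s] & [set G]].
  rewrite disjoint_sym disjoints1 !inE negb_or hGs andbT.
  by apply: hnS; rewrite inE eqxx.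
have -> : supp (u0 + \sum_(j <- s) restrict z j) \subset cover (S0 :|: [set B | B \in s]).
  rewrite /cover bigcup_setU; apply: subset_trans (supp_add _ _) _.
  by apply: setUSS => //; apply: supp_sum_groups.
move=> /(_ isT isT isT isT isT) H.
have := IH hu hsP hnS'; rewrite mulrDr; lra.
Qed.

Lemma sum_groups_sub (z : 'cV[R]_n) (S : {set {set 'I_n}}) : S \subset P ->
  \sum_(G in S) restrict z G = restrict z (cover S).
Proof.
move=> hS; apply/matrixP => i j; rewrite summxE (ord1 j) [RHS]mxE.
have hB := pblock_mem (hcov hP i).
have hxB : i \in pblock P i by rewrite mem_pblock hcov.
case: ifP => hi.
  have [B hBS hiB] := bigcupP hi.
  have eB := same_block hP (subsetP hS _ hBS) hB hiB hxB.
  rewrite (bigD1 B) //= mxE hiB big1 ?addr0 // => G /andP [hG hne].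
  rewrite mxE; case: ifP => // hiG.
  by move: hne; rewrite (same_block hP (subsetP hS _ hG) hB hiG hxB) -eB eqxx.
rewrite big1 // => G hG; rewrite mxE; case: ifP => // hiG.
by move: hi; rewrite /cover; move/negbT/negP; case; apply/bigcupP; exists G.
Qed.

Lemma restrict_bigcup (z : 'cV[R]_n) (F : nat -> {set 'I_n}) s :
  (forall i j, (i < s)%N -> (j < s)%N -> i <> j -> [disjoint F i & F j]) ->
  restrict z (\bigcup_(j < s) F j) = \sum_(j < s) restrict z (F j).
Proof.
elim: s => [|s IH] hd; first by rewrite !big_ord0 restrict_set0.
rewrite !big_ord_recr /= restrict_disjU ?IH //.
  by move=> i j hi hj; apply: hd; lia.
rewrite disjoint_sym; apply: bigcup_disjoint => i _; apply: hd => //.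
  by rewrite ltnS ltnW.
move=> e; have := ltn_ord i; lia.
Qed.

End More.

Lemma sq_le (R : realType) (x y : R) : 0 <= y -> x ^+ 2 <= y ^+ 2 -> x <= y.
Proof. move=> hy hxy; nra. Qed.


Lemma final_alg (R : realType) (t S e sg u0 N0 Nt q s2 r d f g dl : R) :
  0 < f -> 0 <= r -> 0 <= d -> 0 <= sg -> 0 <= e -> 0 <= q -> 0 <= s2 -> 0 <= dl -> 0 <= g ->
  0 < 1 - (1 + s2 * r * d / f) * dl ->
  (1 - dl) * t <= 2 * e * q + s2 * dl * S -> S <= f^-1 * Nt ->
  Nt <= r * N0 + r * (1 + g) * sg -> N0 <= d * u0 -> u0 <= t -> 0 <= t ->
  let Delta := 1 - (1 + s2 * r * d / f) * dl in
  let D1 := r * (1 + g) / f * ((1 + (s2 - 1) * dl) / Delta) in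
  let D2 := 2 * (1 + r * d / f) * (q / Delta) in
  let D3 := r * (1 + g) * ((1 + (s2 * d / f - 1) * dl) / Delta) in
  let D4 := 2 * d * (1 + r) * (q / Delta) in
  t + S <= D1 * sg + D2 * e /\ N0 + Nt <= D3 * sg + D4 * e.
Proof.
move=> hf hr hd hsg he hq hs2 hdl hg hD h1 h2 h3 h4 h5 ht Delta D1 D2 D3 D4.
have hD' : 0 < f - (f + s2 * r * d) * dl.
  have -> : f - (f + s2 * r * d) * dl = f * (1 - (1 + s2 * r * d / f) * dl).
    by field; rewrite gt_eqF.
  by rewrite mulr_gt0.
set K := r * (1 + g).
have hK : 0 <= K by rewrite /K mulr_ge0 // addr_ge0.
have hNt : Nt <= r * d * t + K * sg.
  apply: le_trans h3 _; rewrite lerD2r -mulrA ler_wpM2l //.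
  by apply: le_trans h4 _; rewrite ler_wpM2l.
have hfi : 0 < f^-1 by rewrite invr_gt0.
have hS : S <= (r * d * t + K * sg) / f.
  by apply: le_trans h2 _; rewrite mulrC ler_wpM2r // ltW.
have hrdf : 0 <= r * d / f by rewrite divr_ge0 ?mulr_ge0 // ltW.
set X := 2 * e * q + s2 * dl * K * sg / f.
have hDt : Delta * t <= X.
  have e2 : s2 * dl * S <= s2 * dl * ((r * d * t + K * sg) / f) by rewrite ler_wpM2l ?mulr_ge0.
  rewrite /Delta /X; nra.
have htX : t <= X / Delta by rewrite ler_pdivlMr // mulrC.
split.
  apply: (le_trans (y := t + (r * d * t + K * sg) / f)); first by rewrite lerD2l.
  apply: (le_trans (y := (1 + r * d / f) * (X / Delta) + K * sg / f)).
    have -> : t + (r * d * t + K * sg) / f = (1 + r * d / f) * t + K * sg / f.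
      by field; rewrite gt_eqF.
    by rewrite lerD2r ler_wpM2l // addr_ge0.
  rewrite le_eqVlt; apply/orP; left; apply/eqP.
  rewrite /D1 /D2 /X /K /Delta; field.
  by rewrite gt_eqF //= gt_eqF.
apply: (le_trans (y := (1 + r) * (d * t) + K * sg)).
  have : N0 <= d * t by apply: le_trans h4 _; rewrite ler_wpM2l.
  move=> h6; nra.
apply: (le_trans (y := (1 + r) * (d * (X / Delta)) + K * sg)).
  by rewrite lerD2r ler_wpM2l ?addr_ge0 // ler_wpM2l.
rewrite le_eqVlt; apply/orP; left; apply/eqP.
rewrite /D3 /D4 /X /K /Delta; field.
by rewrite gt_eqF //= gt_eqF.
Qed.

Lemma zmod_id (V : zmodType) (a b c : V) : b - a = c - ((a + c) - b).
Proof. by rewrite opprB opprD addrA addrC addrA addrNK addrC. Qed.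

Lemma sum2_sq (R : realType) (x y : R) : (x + y) ^+ 2 <= 2 * (x ^+ 2 + y ^+ 2).
Proof. have := sqr_ge0 (x - y); rewrite sqrrB sqrrD; lra. Qed.

Lemma le_addsq (R : realType) (x y : R) : x ^+ 2 <= x ^+ 2 + y ^+ 2.
Proof. by rewrite lerDl sqr_ge0. Qed.

Lemma key_alg (R : realType) (t N M D Sg u0 u1 S e q s2 dl : R) :
  0 <= t -> 0 <= N -> 0 <= M -> 0 <= S -> 0 <= dl -> 0 <= q -> 0 <= e -> 0 <= s2 ->
  (1 - dl) * t ^+ 2 <= N ^+ 2 -> N ^+ 2 = D - Sg -> D <= N * M ->
  - dl * (u0 + u1) * S <= Sg -> M <= 2 * e -> N <= q * t -> u0 + u1 <= s2 * t ->
  (1 - dl) * t <= 2 * e * q + s2 * dl * S.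
Proof.
move=> ht hN hM hS hdl hq he hs2 h1 h2 h3 h4 h5 h6 h7.
have hX : 0 <= 2 * e * q + s2 * dl * S by apply: addr_ge0; apply: mulr_ge0 => //; apply: mulr_ge0.
have hNM : N * M <= (q * t) * (2 * e) by apply: ler_pM.
have hu : dl * (u0 + u1) * S <= dl * (s2 * t) * S.
  exact: (ler_wpM2r hS (ler_wpM2l hdl h7)).
have h8 : (1 - dl) * t ^+ 2 <= t * (2 * e * q + s2 * dl * S).
  have -> : t * (2 * e * q + s2 * dl * S) = (q * t) * (2 * e) + dl * (s2 * t) * S by ring.
  lra.
have [t0|tpos] := eqVneq t 0; first by rewrite t0 mulr0.
have tp : 0 < t by rewrite lt0r tpos.
rewrite -(ler_pM2l tp); apply: le_trans h8; rewrite le_eqVlt; apply/orP; left; apply/eqP; ring.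
Qed.

Lemma cone_alg (R : realType) (NPx0h0 SumNP NPxh SumNA NAxht NPx NPx0 NPxt NPh0 NAh0 NAht
   a b g r sg : R) :
  0 < a -> 0 < g -> r * (a * g) = b -> 1 <= r * g -> 0 <= sg ->
  NPx0h0 + g * SumNP <= NPxh -> a * SumNA <= SumNP -> NAxht <= SumNA ->
  NPxh <= NPx -> NPx <= NPx0 + NPxt -> NPxt <= b * sg -> NPx0 <= NPx0h0 + NPh0 ->
  NAht <= NAxht + sg -> NPh0 <= b * NAh0 ->
  NAht <= r * NAh0 + r * (1 + g) * sg.
Proof.
move=> ha hg hrb hrg hsg c1 c2 c3 c4 c5 c6 c7 c8 c9.
have hag : 0 < a * g by apply: mulr_gt0.
have e1 : a * g * NAht <= g * SumNP + a * g * sg.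
  have : a * NAht <= a * NAxht + a * sg by rewrite -mulrDr ler_wpM2l // ltW.
  have : a * NAxht <= a * SumNA by rewrite ler_wpM2l // ltW.
  move=> h1 h2.
  have h3 : a * NAht <= SumNP + a * sg.
    apply: le_trans h2 _; rewrite lerD2r; exact: le_trans h1 c2.
  have : g * (a * NAht) <= g * (SumNP + a * sg) by apply: ler_wpM2l => //; apply: ltW.
  by rewrite !mulrA [g * a]mulrC mulrDr mulrA [g * a]mulrC.
have e2 : a * g * NAht <= a * g * (r * NAh0 + (r + 1) * sg).
  have -> : a * g * (r * NAh0 + (r + 1) * sg) = b * NAh0 + b * sg + a * g * sg.
    by rewrite -hrb; ring.
  lra.
have e3 : NAht <= r * NAh0 + (r + 1) * sg by rewrite -(ler_pM2l hag).
apply: le_trans e3 _; rewrite lerD2l ler_wpM2r //.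
by rewrite mulrDr mulr1 lerD2l.
Qed.


Unset Implicit Arguments. Set Strict Implicit. Set Printing Implicit Defensive.

Theorem theorem4p1 (R : realType) (n m k : nat) (P : {set {set 'I_n}})
  (hP : partition P [set: 'I_n]) (hPk : forall B, B \in P -> (#|B| <= k)%N)
  (NA NP : 'cV[R]_n -> R) (gamma : R)
  (hNA : is_norm NA) (hNP : is_norm NP)
  (hgamma : 0 < gamma <= 1)
  (hdecA : decomposable P NA) (hdecP : gdecomposable P gamma NP)
  (a b c d : R)
  (ha : is_min_ratio P k NP NA a) (hb : is_max_ratio P k NP NA b)
  (hc : is_min_ratio P k NA (@norm2 R n) c)
  (hd : is_max_ratio P k NA (@norm2 R n) d)
  (f : R) (hf0 : 0 < f)
  (hf : forall (h : 'cV[R]_n) (L0 : {set 'I_n}) (Ls : seq {set 'I_n}),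
      gsparse P k L0 -> opt_decomp P k NA h L0 Ls ->
      \sum_(1 <= j < size Ls) norm2 (restrict h (nth set0 Ls j))
        <= f^-1 * NA (restrict h (~: L0)))
  (A : 'M[R]_(m, n)) (delta : R) (hdelta : 0 < delta < 1)
  (hGRIP : GRIP P (2 * k) A delta)
  (hcomp : delta < f / (f + Num.sqrt 2 * (b / (a * gamma)) * d))
  (x : 'cV[R]_n) (eta : 'cV[R]_m) (eps : R) (heta : norm2 eta <= eps)
  (y : 'cV[R]_m) (hy : y = A *m x + eta)
  (xh : 'cV[R]_n)
  (hxh_feas : norm2 (y - A *m xh) <= eps)
  (hxh_min : forall z : 'cV[R]_n, norm2 (y - A *m z) <= eps -> NP xh <= NP z) :
  let r := b / (a * gamma) in
  let sigma := sigma_idx P k NA x in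
  let Delta := 1 - (1 + Num.sqrt 2 * r * d / f) * delta in
  let D1 := r * (1 + gamma) / f * ((1 + (Num.sqrt 2 - 1) * delta) / Delta) in
  let D2 := 2 * (1 + r * d / f) * (Num.sqrt (1 + delta) / Delta) in
  let D3 := r * (1 + gamma) * ((1 + (Num.sqrt 2 * d / f - 1) * delta) / Delta) in
  let D4 := 2 * d * (1 + r) * (Num.sqrt (1 + delta) / Delta) in
  norm2 (xh - x) <= D1 * sigma + D2 * eps /\
  NA (xh - x) <= D3 * sigma + D4 * eps.
Proof.
move=> r sigma Delta D1 D2 D3 D4.
have NP0 := norm0 hNP. have NA0 := norm0 hNA.
have hNPge := norm_ge0 hNP. have hNAge := norm_ge0 hNA.
have hNApos : forall u, u != 0 -> 0 < NA u := norm_gt0 hNA.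
have hNPpos : forall u, u != 0 -> 0 < NP u := norm_gt0 hNP.
have n2pos : forall u : 'cV[R]_n, u != 0 -> 0 < norm2 u := fun u => @norm2_pos R n u.
case/andP: hgamma => hg0 hg1.
case/andP: hdelta => hdl0 hdl1.
have ha0 : 0 < a := min_ratio_pos hNApos hNPpos ha.
have hd0 : 0 < d := max_ratio_pos n2pos hNApos hd.
have hab : a <= b.
  case: ha => [[L [z [hL [hne ->]]]] _]; case: hb => _ hb'; exact: hb' L z hL hne.
have hb0 : 0 < b by apply: lt_le_trans hab.
have hr : 0 < r by rewrite /r divr_gt0 // mulr_gt0.
have hrg : 1 <= r * gamma.
  have -> : r * gamma = b / a by rewrite /r; field; rewrite !gt_eqF.
  by rewrite ler_pdivlMr // mul1r.
have hrb : r * (a * gamma) = b by rewrite /r; field; rewrite !gt_eqF.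
have NP_le : forall z, NP z <= b * NA z.
  move=> z; rewrite (normA_groups hP z hNA hdecA) mulr_sumr -{1}(sum_groups hP z).
  apply: le_trans (norm_sum hNP _ _ _) _; apply: ler_sum => G hG.
  exact: (max_ratio_le NP0 NA0 hNApos z hb (gsparse_group hG (hPk G hG))).
have [L0 [hL0 hsig]] := sigma_real k P NA x.
have hsigma : sigma = NA (restrict x (~: L0)) by rewrite /sigma hsig restrict_compl.
have hsig0 : 0 <= sigma by rewrite hsigma.
have [S0 hS0 eL0] := gsparse_cover hL0.
set h := xh - x.
have [Ls hopt] := opt_exists hP hPk hNA hdecA h hL0.
have hfL := hf h L0 Ls hL0 hopt.
case: hopt => o1 o2 o3 o4.
set s := size Ls in o1 o2 o3 o4 hfL.
set L1 := nth set0 Ls 0.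
have [hL1k hL1c] : gsparse P k L1 /\ L1 \subset ~: L0.
  case: (ltnP 0 s) => hs; first exact: o1.
  by rewrite /L1 nth_default // gsparse0 sub0set.
have hd01 : [disjoint L0 & L1] by rewrite disjoint_sym disjoints_subset.
have hLj : forall j, (1 <= j < s)%N -> [/\ gsparse P k (nth set0 Ls j),
    [disjoint L0 & nth set0 Ls j] & [disjoint L1 & nth set0 Ls j]].
  move=> j /andP [hj1 hjs]; have [hk hcc] := o1 j hjs; split => //.
    by rewrite disjoint_sym disjoints_subset.
  apply: (o2 0 j) => //; first exact: leq_ltn_trans (leq0n j) hjs.
  by move=> e; rewrite -e in hj1.
set Rest := \sum_(1 <= j < s) restrict h (nth set0 Ls j).
have hcompl : restrict h (~: L0) = restrict h L1 + Rest.
  rewrite -o3 (big_nth set0) big_mkord (restrict_bigcup hP); last exact: o2.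
  rewrite -(big_mkord xpredT (fun j => restrict h (nth set0 Ls j))).
  case: (ltnP 0 s) => hs; first by rewrite big_ltn.
  by rewrite big_geq // /Rest big_geq ?(leq_trans hs) // /L1 nth_default // restrict_set0 addr0.
set h0 := restrict h L0; set h1 := restrict h L1.
set T := L0 :|: L1; set hT := restrict h T.
have ehT : hT = h0 + h1 := restrict_disjU h hd01.
have eh : h = hT + Rest by rewrite ehT -addrA -hcompl restrictC.
have hTk : gsparse P (2 * k) T := gsparseU hP hL0 hL1k.
set t := norm2 hT; set u0 := norm2 h0; set u1 := norm2 h1.
set S := \sum_(1 <= j < s) norm2 (restrict h (nth set0 Ls j)).
have ht2 : t ^+ 2 = u0 ^+ 2 + u1 ^+ 2 := norm2_disjU h hd01.
have ht0 : 0 <= t := norm2_ge0 _.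
have hu00 : 0 <= u0 := norm2_ge0 _.
have hu10 : 0 <= u1 := norm2_ge0 _.
have hS0' : 0 <= S by apply: sumr_ge0 => j _; apply: norm2_ge0.
have hnh : norm2 h <= t + S.
  rewrite {1}eh; apply: le_trans (norm2D _ _) _; rewrite lerD2l; exact: norm2_sum.
have [g1 g2] := hGRIP hT (ex_intro _ T (conj hTk (supp_restrict h T))).
have eAh : A *m h = eta - (y - A *m xh).
  by rewrite /h mulmxBr hy; apply: zmod_id.
have heps0 : 0 <= eps by apply: le_trans heta; apply: norm2_ge0.
have hAh : norm2 (A *m h) <= 2 * eps.
  have -> : 2 * eps = eps + eps by ring.
  rewrite eAh; apply: le_trans (norm2D _ _) _; rewrite norm2N; exact: lerD.
have hAhT : norm2 (A *m hT) <= Num.sqrt (1 + delta) * t.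
  apply: sq_le; first by rewrite mulr_ge0 ?sqrtr_ge0.
  rewrite exprMn [Num.sqrt (1 + delta) ^+ 2]sqr_sqrtr; first exact: g2.
  by rewrite addr_ge0 // ltW.
have hsum2 : u0 + u1 <= Num.sqrt 2 * t.
  apply: sq_le; first by rewrite mulr_ge0 ?sqrtr_ge0.
  rewrite exprMn [Num.sqrt 2 ^+ 2]sqr_sqrtr // ht2; exact: sum2_sq.
have hu0t : u0 <= t by apply: sq_le => //; rewrite ht2; exact: le_addsq.
have eAhT : A *m hT = A *m h - \sum_(1 <= j < s) A *m restrict h (nth set0 Ls j).
  have -> : hT = h - Rest by rewrite eh addrK.
  by rewrite mulmxBr /Rest mulmx_sum.
have hdot : norm2 (A *m hT) ^+ 2 = dotp (A *m hT) (A *m h)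
    - \sum_(1 <= j < s) dotp (A *m hT) (A *m restrict h (nth set0 Ls j)).
  by rewrite norm2_sq {2}eAhT dotpDr dotpNr dotp_sumr.
have hCS := CS (A *m hT) (A *m h).
have hsumge : - delta * (u0 + u1) * S <=
    \sum_(1 <= j < s) dotp (A *m hT) (A *m restrict h (nth set0 Ls j)).
  rewrite /S mulr_sumr; apply: ler_sum_nat => j hj.
  have [hk hd0j hd1j] := hLj j hj.
  rewrite ehT mulmxDr dotpDl.
  have H1 := grip_dot hP h hGRIP hL0 hk hd0j.
  have H2 := grip_dot hP h hGRIP hL1k hk hd1j.
  apply: le_trans (lerD H1 H2); rewrite -/h0 -/h1 -/u0 -/u1.
  by rewrite le_eqVlt; apply/orP; left; apply/eqP; ring.
have key := key_alg ht0 (norm2_ge0 _) (norm2_ge0 _) hS0' (ltW hdl0) (sqrtr_ge0 _) heps0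
  (sqrtr_ge0 2) g1 hdot hCS hsumge hAh hAhT hsum2.
have hxhx : NP xh <= NP x.
  by apply: hxh_min; rewrite hy addrAC subrr add0r.
have hsub : {subset enum (mem (P :\: S0)) <= P}.
  by move=> G; rewrite mem_enum inE => /andP [_ ->].
have hnot : forall G, G \in enum (mem (P :\: S0)) -> G \notin S0.
  by move=> G; rewrite mem_enum inE => /andP [].
have hsuppx : supp (restrict xh L0) \subset cover S0 by rewrite -eL0 supp_restrict.
have base := gdecomp_base xh hNP hdecP hS0 hsuppx (enum_uniq (mem (P :\: S0))) hsub hnot.
rewrite !big_enum (sum_groups_sub hP xh (subsetDl P S0)) -(compl_cover hP hS0) -eL0 in base.
rewrite restrictC in base.
have c2 : a * \sum_(G in P :\: S0) NA (restrict xh G) <= \sum_(G in P :\: S0) NP (restrict xh G).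
  rewrite mulr_sumr; apply: ler_sum => G; rewrite inE => /andP [_ hG].
  exact: (min_ratio_ge NP0 NA0 hNApos xh ha (gsparse_group hG (hPk G hG))).
have c3 : NA (restrict xh (~: L0)) <= \sum_(G in P :\: S0) NA (restrict xh G).
  have -> : restrict xh (~: L0) = \sum_(G in P :\: S0) restrict xh G.
    by rewrite (sum_groups_sub hP xh (subsetDl P S0)) -(compl_cover hP hS0) -eL0.
  exact: (norm_sum hNA).
have c5 : NP x <= NP (restrict x L0) + NP (restrict x (~: L0)).
  by rewrite -{1}(restrictC x L0); exact: normD hNP _ _.
have c6 : NP (restrict x (~: L0)) <= b * sigma by rewrite hsigma; exact: NP_le.
have c7 : NP (restrict x L0) <= NP (restrict xh L0) + NP h0.
  have -> : restrict x L0 = restrict xh L0 - h0.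
    by rewrite /h0 /h restrictB opprB addrC subrK.
  by apply: le_trans (normD hNP _ _) _; rewrite normN.
have c8' : NA (restrict h (~: L0)) <= NA (restrict xh (~: L0)) + NA (restrict x (~: L0)).
  have -> : restrict h (~: L0) = restrict xh (~: L0) - restrict x (~: L0) by rewrite restrictB.
  by apply: le_trans (normD hNA _ _) _; rewrite normN.
have c8 : NA (restrict h (~: L0)) <= NA (restrict xh (~: L0)) + sigma by rewrite hsigma.

have c9 : NP h0 <= b * NA h0 := NP_le h0.
have hcone := cone_alg ha0 hg0 hrb hrg hsig0 base c2 c3 hxhx c5 c6 c7 c8 c9.
have h4 : NA h0 <= d * u0 := max_ratio_le NA0 (@norm2_0 R n) n2pos h hd hL0.
have hden : 0 < f + Num.sqrt 2 * r * d.
  have H : 0 <= Num.sqrt 2 * r * d.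
    by apply: mulr_ge0; [apply: mulr_ge0; [exact: sqrtr_ge0 | exact: ltW] | exact: ltW].
  by apply: lt_le_trans hf0 _; rewrite lerDl.
have hDelta : 0 < 1 - (1 + Num.sqrt 2 * r * d / f) * delta.
  have -> : 1 - (1 + Num.sqrt 2 * r * d / f) * delta =
      (f - delta * (f + Num.sqrt 2 * r * d)) / f by field; rewrite gt_eqF.
  apply: divr_gt0 => //; rewrite subr_gt0 -ltr_pdivlMr //; exact: hcomp.
have [F1 F2] := final_alg hf0 (ltW hr) (ltW hd0) hsig0 heps0 (sqrtr_ge0 _) (sqrtr_ge0 _)
  (ltW hdl0) (ltW hg0) hDelta key hfL hcone h4 hu0t ht0.
split; first exact: le_trans hnh F1.
apply: le_trans F2.
by rewrite -/h -{1}(restrictC h L0); exact: normD hNA _ _.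
Qed.
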